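(* Let $A^+,A^-\in\mathbb R^3$ be distinct non-colinear unit vectors and let $\chi$ be the self-similar solution of the binormal flow with $\chi(0,x)=A^+x$ for $x\ge0$ and $\chi(0,x)=A^-x$ for $x\le0$, with associated complex vectors $B^\pm$. Let $\rho$ be the rotation of angle $\pi$ around the axis directed by $A^+-A^-$. Let $\chi^*$ be the self-similar solution with initial data $\chi^*(0,x)=\chi(0,-x)$, i.e. $\chi^*(0,x)=-A^-x$ for $x\ge0$ and $-A^+x$ for $x\le0$, with associated corner vectors $A^{\pm*}$ (so $\chi^*(0,x)=A^{+*}x$ for $x\geq 0$, $A^{-*}x$ for $x\le 0$) and complex vectors $B^{\pm*}$. Then $$A^{\pm*}=\rho(A^\pm)=-A^\mp=R^\mp(-A^\mp),\qquad B^{\pm*}=\rho(B^\pm)=R^\mp\overline{B^\mp},$$ where $R^\mp$ is a rotation of angle $2\theta$ in the plane $\Pi^\mp$ orthogonal to $A^\mp$ (the plane spanned by $\Re B^\mp$ and $\Im B^\mp$), $\theta$ being the angle between $\Re B^\mp$ and the plane $\Pi$ spanned by $A^+$ and $A^-$.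
   Context: The binormal flow is $\chi_t=\chi_x\wedge\chi_{xx}$ for curves in $\mathbb R^3$ parametrized by arclength $x$, with Frenet frame $(T,n,b)$, curvature $c$, torsion $\tau$. Known facts used as setting: for distinct non-colinear unit vectors $A^\pm$ there is a unique self-similar solution $\chi(t,x)=\sqrt t\,G(x/\sqrt t)$, $t>0$, with $\chi(0,x)=A^+x$ for $x\ge0$ and $A^-x$ for $x\le0$; its curvature and torsion are $a/\sqrt t$ and $x/(2t)$ with $a>0$ determined by $\sin\frac{\widehat{(A^+,-A^-)}}2=e^{-\pi a^2/2}$, and there are complex vectors $B^\pm$ orthogonal to $A^\pm$ (with $\Re B^\pm\perp\Im B^\pm$, $|\Re B^\pm|=|\Im B^\pm|=1$) given by $B^\pm=\lim_{x\to\pm\infty}(n+ib)(t,x)e^{i\int_0^x\tau(t,s)ds}e^{-ia^2\log\sqrt t+ia^2\log|x|}$. *)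

(* Defs.v *)
From Stdlib Require Import Reals.
From Coquelicot Require Import Coquelicot.
Open Scope R_scope.

Record V3 := mkV { v1 : R; v2 : R; v3 : R }.

Definition vadd (u v : V3) : V3 := mkV (v1 u + v1 v) (v2 u + v2 v) (v3 u + v3 v).
Definition vscale (c : R) (v : V3) : V3 := mkV (c * v1 v) (c * v2 v) (c * v3 v).
Definition vopp (v : V3) : V3 := vscale (-1) v.
Definition vsub (u v : V3) : V3 := vadd u (vopp v).
Definition vdot (u v : V3) : R := v1 u * v1 v + v2 u * v2 v + v3 u * v3 v.
Definition vcross (u v : V3) : V3 :=
  mkV (v2 u * v3 v - v3 u * v2 v) (v3 u * v1 v - v1 u * v3 v) (v1 u * v2 v - v2 u * v1 v).
Definition vnorm (v : V3) : R := sqrt (vdot v v).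

(** Complex vectors of C^3, written Re + i Im *)
Record CV3 := mkCV { cre : V3; cim : V3 }.
Definition cconj (B : CV3) : CV3 := mkCV (cre B) (vopp (cim B)).
Definition capply (f : V3 -> V3) (B : CV3) : CV3 := mkCV (f (cre B)) (f (cim B)).

(** Rotation of angle phi around the unit axis k (Rodrigues' formula). *)
Definition rot (k : V3) (phi : R) (v : V3) : V3 :=
  vadd (vadd (vscale (cos phi) v) (vscale (sin phi) (vcross k v)))
       (vscale ((1 - cos phi) * vdot k v) k).

Definition rho (Ap Am : V3) (v : V3) : V3 :=
  rot (vscale (/ vnorm (vsub Ap Am)) (vsub Ap Am)) PI v.

(** Unsigned angle in [0, pi/2] between a nonzero vector v and the plane
    spanned by the non-colinear vectors Ap, Am. *)
Definition angle_vec_plane (v Ap Am : V3) : R :=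
  let N := vcross Ap Am in
  asin (Rabs (vdot v N) / (vnorm v * vnorm N)).

Definition angle (u v : V3) : R := acos (vdot u v).

Definition vderivable (f : R -> V3) (x : R) : Prop :=
  ex_derive (fun y => v1 (f y)) x /\ ex_derive (fun y => v2 (f y)) x /\
  ex_derive (fun y => v3 (f y)) x.
Definition vD (f : R -> V3) (x : R) : V3 :=
  mkV (Derive (fun y => v1 (f y)) x) (Derive (fun y => v2 (f y)) x)
      (Derive (fun y => v3 (f y)) x).

(** A curve evolving in time: chi t x, t time, x arclength parameter. *)
Definition dx (chi : R -> R -> V3) (t x : R) : V3 := vD (chi t) x.
Definition dxx (chi : R -> R -> V3) (t x : R) : V3 := vD (dx chi t) x.
Definition dxxx (chi : R -> R -> V3) (t x : R) : V3 := vD (dxx chi t) x.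
Definition dt (chi : R -> R -> V3) (t x : R) : V3 := vD (fun s => chi s x) t.

Definition curv chi t x : R := vnorm (dxx chi t x).
Definition normal chi t x : V3 := vscale (/ curv chi t x) (dxx chi t x).
Definition binormal chi t x : V3 := vcross (dx chi t x) (normal chi t x).
Definition tors chi t x : R :=
  vdot (vcross (dx chi t x) (dxx chi t x)) (dxxx chi t x) / (curv chi t x ^ 2).

Definition binormal_flow (chi : R -> R -> V3) : Prop :=
  forall t x, 0 < t ->
    vderivable (fun s => chi s x) t /\
    vderivable (chi t) x /\ vderivable (dx chi t) x /\ vderivable (dxx chi t) x /\
    vnorm (dx chi t x) = 1 /\
    dt chi t x = vcross (dx chi t x) (dxx chi t x).

Definition selfsimilar_solution (Ap Am : V3) (a : R) (chi : R -> R -> V3) : Prop :=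
  binormal_flow chi /\
  (exists G : R -> V3, forall t x, 0 < t -> chi t x = vscale (sqrt t) (G (x / sqrt t))) /\
  (forall x, 0 <= x -> chi 0 x = vscale x Ap) /\
  (forall x, x <= 0 -> chi 0 x = vscale x Am) /\
  (forall x eps, 0 < eps -> exists delta, 0 < delta /\
      forall t, 0 < t < delta -> vnorm (vsub (chi t x) (chi 0 x)) < eps) /\
  (forall t x, 0 < t -> curv chi t x = a / sqrt t) /\
  (forall t x, 0 < t -> tors chi t x = x / (2 * t)).

Definition corner_param (Ap Am : V3) (a : R) : Prop :=
  0 < a /\ sin (angle Ap (vopp Am) / 2) = exp (- PI * a ^ 2 / 2).

(** The modulated frame (n + i b)(t,x) e^{i Phi(t,x)} with
    Phi = int_0^x tau(t,s) ds - a^2 log sqrt t + a^2 log |x|. *)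
Definition phase (chi : R -> R -> V3) (a t x : R) : R :=
  RInt (fun s => tors chi t s) 0 x - a ^ 2 * ln (sqrt t) + a ^ 2 * ln (Rabs x).
Definition modframe (chi : R -> R -> V3) (a t x : R) : CV3 :=
  let P := phase chi a t x in
  let n := normal chi t x in
  let b := binormal chi t x in
  mkCV (vsub (vscale (cos P) n) (vscale (sin P) b))
       (vadd (vscale (sin P) n) (vscale (cos P) b)).

Definition vlim_pinfty (f : R -> V3) (l : V3) : Prop :=
  forall eps, 0 < eps -> exists M, forall x, M < x -> vnorm (vsub (f x) l) < eps.
Definition vlim_minfty (f : R -> V3) (l : V3) : Prop :=
  forall eps, 0 < eps -> exists M, forall x, x < M -> vnorm (vsub (f x) l) < eps.

Definition is_Bplus (chi : R -> R -> V3) (a : R) (B : CV3) : Prop :=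
  forall t, 0 < t ->
    vlim_pinfty (fun x => cre (modframe chi a t x)) (cre B) /\
    vlim_pinfty (fun x => cim (modframe chi a t x)) (cim B).
Definition is_Bminus (chi : R -> R -> V3) (a : R) (B : CV3) : Prop :=
  forall t, 0 < t ->
    vlim_minfty (fun x => cre (modframe chi a t x)) (cre B) /\
    vlim_minfty (fun x => cim (modframe chi a t x)) (cim B).

Definition rotation_2theta (k Ap Am : V3) (B : CV3) (Rf : V3 -> V3) : Prop :=
  let th := angle_vec_plane (cre B) Ap Am in
  exists phi, (phi = 2 * th \/ phi = - (2 * th)) /\ forall v, Rf v = rot k phi v.

(* Main.v *)
Require Import Defs.
From Stdlib Require Import Reals Lra Psatz.
From Coquelicot Require Import Coquelicot.
Open Scope R_scope.

Lemma V3_ext u v : v1 u = v1 v -> v2 u = v2 v -> v3 u = v3 v -> u = v.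
Proof. destruct u, v; simpl; intros; subst; reflexivity. Qed.

Ltac vunf := unfold vsub, vopp, vadd, vscale, vdot, vcross in *; simpl in *.
Ltac vunfg := unfold vsub, vopp, vadd, vscale, vdot, vcross; simpl.
Ltac veq := apply V3_ext; vunfg; try unfold Rdiv; ring.

Definition V0 := mkV 0 0 0.

Lemma vdot_comm u v : vdot u v = vdot v u.
Proof. vunf; ring. Qed.
Lemma bac_cab a b c : vcross a (vcross b c) = vsub (vscale (vdot a c) b) (vscale (vdot a b) c).
Proof. veq. Qed.
Lemma cramer a b c v :
  vscale (vdot a (vcross b c)) v =
  vadd (vadd (vscale (vdot v (vcross b c)) a) (vscale (vdot v (vcross c a)) b))
       (vscale (vdot v (vcross a b)) c).
Proof. veq. Qed.
Lemma lagrange u v : vdot (vcross u v) (vcross u v) = vdot u u * vdot v v - vdot u v ^ 2.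
Proof. vunf; ring. Qed.
Lemma binet a b c d : vdot (vcross a b) (vcross c d) = vdot a c * vdot b d - vdot a d * vdot b c.
Proof. vunf; ring. Qed.

Definition ON (e1 e2 : V3) := vdot e1 e1 = 1 /\ vdot e2 e2 = 1 /\ vdot e1 e2 = 0.

Lemma ON_cross1 e1 e2 : ON e1 e2 -> vcross e2 (vcross e1 e2) = e1.
Proof. intros [h1 [h2 h3]]. rewrite bac_cab. rewrite (vdot_comm e2 e1), h2, h3. veq. Qed.
Lemma ON_cross2 e1 e2 : ON e1 e2 -> vcross (vcross e1 e2) e1 = e2.
Proof. intros [h1 [h2 h3]].
  replace (vcross (vcross e1 e2) e1) with (vsub (vscale (vdot e1 e1) e2) (vscale (vdot e2 e1) e1)) by veq.
  rewrite (vdot_comm e2 e1), h1, h3. veq. Qed.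

Lemma ON_expand e1 e2 v : ON e1 e2 ->
  v = vadd (vadd (vscale (vdot v e1) e1) (vscale (vdot v e2) e2))
        (vscale (vdot v (vcross e1 e2)) (vcross e1 e2)).
Proof. intros H. pose proof (cramer e1 e2 (vcross e1 e2) v) as C.
  rewrite (ON_cross1 _ _ H), (ON_cross2 _ _ H) in C.
  destruct H as [h1 [h2 h3]]. rewrite h1 in C.
  rewrite <- C. veq. Qed.
Record Fr := mkFr { fT : V3; fN : V3; fB : V3 }.
Definition good (F : Fr) (s : R) :=
  ON (fT F) (fN F) /\ fB F = vscale s (vcross (fT F) (fN F)) /\ s * s = 1.
Definition Rmap (E F : Fr) (v : V3) : V3 :=
  vadd (vadd (vscale (vdot v (fT F)) (fT E)) (vscale (vdot v (fN F)) (fN E)))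
       (vscale (vdot v (fB F)) (fB E)).

Lemma Rmap_add E F u w : Rmap E F (vadd u w) = vadd (Rmap E F u) (Rmap E F w).
Proof. unfold Rmap; veq. Qed.
Lemma Rmap_scale E F c u : Rmap E F (vscale c u) = vscale c (Rmap E F u).
Proof. unfold Rmap; veq. Qed.
Lemma Rmap_opp E F u : Rmap E F (vopp u) = vopp (Rmap E F u).
Proof. unfold Rmap; veq. Qed.
Lemma Rmap_sub E F u w : Rmap E F (vsub u w) = vsub (Rmap E F u) (Rmap E F w).
Proof. unfold Rmap; veq. Qed.

Lemma good_dots F s : good F s ->
  vdot (fT F) (fT F) = 1 /\ vdot (fN F) (fN F) = 1 /\ vdot (fB F) (fB F) = 1 /\
  vdot (fT F) (fN F) = 0 /\ vdot (fT F) (fB F) = 0 /\ vdot (fN F) (fB F) = 0.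
Proof. intros [[h1 [h2 h3]] [hb hs]]. rewrite hb.
  repeat split; auto.
  - replace (vdot (vscale s (vcross (fT F) (fN F))) (vscale s (vcross (fT F) (fN F))))
      with (s*s * vdot (vcross (fT F) (fN F)) (vcross (fT F) (fN F))) by (vunf; ring).
    rewrite lagrange, h1, h2, h3, hs. ring.
  - vunf; ring.
  - vunf; ring.
Qed.

Lemma good_expand F s v : good F s ->
  v = vadd (vadd (vscale (vdot v (fT F)) (fT F)) (vscale (vdot v (fN F)) (fN F)))
        (vscale (vdot v (fB F)) (fB F)).
Proof. intros G. pose proof G as [h [hb hs]]. rewrite (ON_expand _ _ v h) at 1.
  rewrite hb. apply V3_ext; vunf; ring_simplify;
  replace (s^2) with (s*s) by ring; rewrite hs; ring. Qed.

Lemma Rmap_dot E F s u w : good E 1 -> good F s -> vdot (Rmap E F u) (Rmap E F w) = vdot u w.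
Proof. intros GE GF. destruct (good_dots E 1 GE) as [a1 [a2 [a3 [a4 [a5 a6]]]]].
  transitivity (vdot u (vadd (vadd (vscale (vdot w (fT F)) (fT F)) (vscale (vdot w (fN F)) (fN F)))
        (vscale (vdot w (fB F)) (fB F)))).
  2: { rewrite <- (good_expand F s w GF). reflexivity. }
  unfold Rmap. set (T := fT E) in *. set (N := fN E) in *. set (B := fB E) in *.
  transitivity (vdot u (fT F) * vdot w (fT F) * vdot T T + vdot u (fN F) * vdot w (fN F) * vdot N N
    + vdot u (fB F) * vdot w (fB F) * vdot B B
    + (vdot u (fT F) * vdot w (fN F) + vdot u (fN F) * vdot w (fT F)) * vdot T N
    + (vdot u (fT F) * vdot w (fB F) + vdot u (fB F) * vdot w (fT F)) * vdot T B
    + (vdot u (fN F) * vdot w (fB F) + vdot u (fB F) * vdot w (fN F)) * vdot N B).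
  - unfold vdot at 1 2 3 4 5 6 7; vunf; ring.
  - rewrite a1, a2, a3, a4, a5, a6. vunf; ring.
Qed.

Lemma cross_expand a1 a2 a3 b1 b2 b3 e1 e2 e3 :
  vcross (vadd (vadd (vscale a1 e1) (vscale a2 e2)) (vscale a3 e3))
         (vadd (vadd (vscale b1 e1) (vscale b2 e2)) (vscale b3 e3)) =
  vadd (vadd (vscale (a1*b2 - a2*b1) (vcross e1 e2)) (vscale (a2*b3 - a3*b2) (vcross e2 e3)))
       (vscale (a3*b1 - a1*b3) (vcross e3 e1)).
Proof. veq. Qed.

Lemma good_crosses F s : good F s ->
  vcross (fT F) (fN F) = vscale s (fB F) /\ vcross (fN F) (fB F) = vscale s (fT F) /\
  vcross (fB F) (fT F) = vscale s (fN F).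
Proof. intros [h [hb hs]]. rewrite hb. repeat split.
  - apply V3_ext; vunf; ring_simplify; replace (s^2) with (s*s) by ring; rewrite hs; ring.
  - replace (vcross (fN F) (vscale s (vcross (fT F) (fN F)))) with
      (vscale s (vcross (fN F) (vcross (fT F) (fN F)))) by veq.
    rewrite (ON_cross1 _ _ h). reflexivity.
  - replace (vcross (vscale s (vcross (fT F) (fN F))) (fT F)) with
      (vscale s (vcross (vcross (fT F) (fN F)) (fT F))) by veq.
    rewrite (ON_cross2 _ _ h). reflexivity.
Qed.

Lemma Rmap_cross E F s u w : good E 1 -> good F s ->
  vcross (Rmap E F u) (Rmap E F w) = vscale s (Rmap E F (vcross u w)).
Proof. intros GE GF. unfold Rmap at 1 2. rewrite cross_expand.
  destruct (good_crosses E 1 GE) as [c1 [c2 c3]]. rewrite c1, c2, c3.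
  rewrite <- !binet.
  destruct (good_crosses F s GF) as [d1 [d2 d3]]. rewrite d1, d2, d3.
  unfold Rmap. veq. Qed.
Lemma dplus (f g : R -> R) (x df dg : R) : is_derive f x df -> is_derive g x dg ->
  is_derive (fun y => f y + g y) x (df + dg).
Proof. intros. exact (is_derive_plus f g x df dg H H0). Qed.
Lemma dminus (f g : R -> R) (x df dg : R) : is_derive f x df -> is_derive g x dg ->
  is_derive (fun y => f y - g y) x (df - dg).
Proof. intros. exact (is_derive_minus f g x df dg H H0). Qed.
Lemma dmul (f g : R -> R) (x df dg : R) : is_derive f x df -> is_derive g x dg ->
  is_derive (fun y => f y * g y) x (df * g x + f x * dg).
Proof. intros. apply (is_derive_mult f g x df dg H H0). intros; apply Rmult_comm. Qed.
Lemma dconst (a x : R) : is_derive (fun _ => a) x 0.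
Proof. exact (is_derive_const a x). Qed.
Lemma deq (f : R -> R) (x l l' : R) : is_derive f x l -> l = l' -> is_derive f x l'.
Proof. intros; subst; auto. Qed.
Lemma dext (f g : R -> R) (x l : R) : (forall y, f y = g y) -> is_derive f x l -> is_derive g x l.
Proof. intros. exact (is_derive_ext f g x l H H0). Qed.

Definition vder (f : R -> V3) (x : R) (d : V3) : Prop :=
  is_derive (fun y => v1 (f y)) x (v1 d) /\ is_derive (fun y => v2 (f y)) x (v2 d) /\
  is_derive (fun y => v3 (f y)) x (v3 d).

Lemma vder_of f x : vderivable f x -> vder f x (vD f x).
Proof. intros [h1 [h2 h3]]. unfold vD; simpl. split; [|split]; apply Derive_correct; auto. Qed.

Lemma vder_unique f x d1 d2 : vder f x d1 -> vder f x d2 -> d1 = d2.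
Proof. intros [a1 [a2 a3]] [b1 [b2 b3]].
  apply is_derive_unique in a1, a2, a3, b1, b2, b3. apply V3_ext; congruence. Qed.

Lemma vder_ext f g x d : (forall y, f y = g y) -> vder f x d -> vder g x d.
Proof. intros E [h1 [h2 h3]]. split; [|split]; eapply dext; eauto; intros; simpl; rewrite E; auto. Qed.

Lemma vder_eq f x d d' : vder f x d -> d = d' -> vder f x d'.
Proof. intros; subst; auto. Qed.

Lemma vder_dot f g x df dg : vder f x df -> vder g x dg ->
  is_derive (fun y => vdot (f y) (g y)) x (vdot df (g x) + vdot (f x) dg).
Proof. intros [a1 [a2 a3]] [b1 [b2 b3]]. unfold vdot.
  eapply deq. apply dplus. apply dplus. apply (dmul _ _ _ _ _ a1 b1). apply (dmul _ _ _ _ _ a2 b2).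
  apply (dmul _ _ _ _ _ a3 b3). ring. Qed.

Lemma vder_cross f g x df dg : vder f x df -> vder g x dg ->
  vder (fun y => vcross (f y) (g y)) x (vadd (vcross df (g x)) (vcross (f x) dg)).
Proof. intros [a1 [a2 a3]] [b1 [b2 b3]]. unfold vcross, vadd; simpl.
  split; [|split]; (eapply deq; [apply dminus; apply dmul; eauto | cbv beta; simpl; ring]). Qed.

Lemma vder_add f g x df dg : vder f x df -> vder g x dg ->
  vder (fun y => vadd (f y) (g y)) x (vadd df dg).
Proof. intros [a1 [a2 a3]] [b1 [b2 b3]]. unfold vadd; simpl. split; [|split]; apply dplus; auto. Qed.

Lemma vder_scal h f x dh df : is_derive h x dh -> vder f x df ->
  vder (fun y => vscale (h y) (f y)) x (vadd (vscale dh (f x)) (vscale (h x) df)).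
Proof. intros H [a1 [a2 a3]]. unfold vscale, vadd; simpl. split; [|split]; apply dmul; auto. Qed.

Lemma vder_const (c : V3) x : vder (fun _ => c) x V0.
Proof. split; [|split]; apply dconst. Qed.

Lemma vder_cscale c f x df : vder f x df -> vder (fun y => vscale c (f y)) x (vscale c df).
Proof. intros H. eapply vder_eq. apply vder_scal. apply dconst. exact H. veq. Qed.

Lemma vder_sub f g x df dg : vder f x df -> vder g x dg ->
  vder (fun y => vsub (f y) (g y)) x (vsub df dg).
Proof. intros. unfold vsub, vopp. apply vder_add; auto. apply vder_cscale; auto. Qed.

Lemma vder_Rmap E F f x df : vder f x df -> vder (fun y => Rmap E F (f y)) x (Rmap E F df).
Proof. intros H. unfold Rmap.
  assert (K : forall c, is_derive (fun y => vdot (f y) c) x (vdot df c)).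
  { intros c. eapply deq. apply vder_dot. exact H. apply vder_const. unfold V0; vunf; ring. }
  eapply vder_eq. apply vder_add. apply vder_add.
  apply vder_scal. apply K. apply vder_const.
  apply vder_scal. apply K. apply vder_const.
  apply vder_scal. apply K. apply vder_const.
  unfold V0; veq. Qed.

Lemma vder_dot_const f c x df : vder f x df -> is_derive (fun y => vdot (f y) c) x (vdot df c).
Proof. intros H. eapply deq. apply vder_dot. exact H. apply vder_const. unfold V0; vunf; ring. Qed.

Lemma vder_comp_opp f x df : vder f (-x) df -> vder (fun y => f (-y)) x (vopp df).
Proof. intros [a1 [a2 a3]].
  assert (Hop : @is_derive R_AbsRing R_NormedModule (fun y : R => - y) x (-1)).
  { eapply deq. apply (is_derive_opp (K:=R_AbsRing) (V:=R_NormedModule) (fun y => y) x 1). apply (is_derive_id (K:=R_AbsRing)). reflexivity. }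
  unfold vopp, vscale; simpl. split; [|split].
  - pose proof (is_derive_comp (fun y => v1 (f y)) (fun y => -y) x _ _ a1 Hop) as h. exact h.
  - pose proof (is_derive_comp (fun y => v2 (f y)) (fun y => -y) x _ _ a2 Hop) as h. exact h.
  - pose proof (is_derive_comp (fun y => v3 (f y)) (fun y => -y) x _ _ a3 Hop) as h. exact h.
Qed.

Lemma dzero_const (f : R -> R) : (forall x, is_derive f x 0) -> forall x y, f x = f y.
Proof. intros H x y.
  destruct (MVT_gen f y x (fun _ => 0)) as [c [_ hc]].
  - intros; apply H.
  - intros z _. apply continuity_pt_filterlim. apply (ex_derive_continuous (K:=R_AbsRing) (V:=R_NormedModule) f z). exists 0; apply H.
  - lra. Qed.

Lemma vdzero_const f : (forall x, vder f x V0) -> forall x y, f x = f y.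
Proof. intros H x y. apply V3_ext.
  - apply (dzero_const (fun y => v1 (f y))); intros z; apply H.
  - apply (dzero_const (fun y => v2 (f y))); intros z; apply H.
  - apply (dzero_const (fun y => v3 (f y))); intros z; apply H. Qed.
Lemma vdot_ge0 v : 0 <= vdot v v.
Proof. vunf; nra. Qed.
Lemma vnorm_sq v c : vnorm v = c -> vdot v v = c * c.
Proof. unfold vnorm. intros H. rewrite <- H. rewrite sqrt_sqrt; auto. apply vdot_ge0. Qed.
Lemma vnorm_ge0 v : 0 <= vnorm v.
Proof. apply sqrt_pos. Qed.

Lemma deriv_uniq (f : R -> R) x l1 l2 : is_derive f x l1 -> is_derive f x l2 -> l1 = l2.
Proof. intros h1 h2. apply is_derive_unique in h1, h2. congruence. Qed.

Lemma const_deriv0 (f : R -> R) c x l : (forall y, f y = c) -> is_derive f x l -> l = 0.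
Proof. intros E h. eapply deriv_uniq. exact h. eapply dext. 2: apply (dconst c x). intros; simpl; auto. Qed.

Definition frame_at chi t x := mkFr (dx chi t x) (normal chi t x) (binormal chi t x).

Lemma frenet chi a : 0 < a -> binormal_flow chi ->
  (forall x, curv chi 1 x = a / sqrt 1) -> (forall x, tors chi 1 x = x / (2 * 1)) ->
  forall x,
  vder (chi 1) x (dx chi 1 x) /\
  vder (dx chi 1) x (vscale a (normal chi 1 x)) /\
  vder (normal chi 1) x (vadd (vscale (-a) (dx chi 1 x)) (vscale (x/2) (binormal chi 1 x))) /\
  vder (binormal chi 1) x (vscale (-(x/2)) (normal chi 1 x)) /\
  good (frame_at chi 1 x) 1.
Proof.
  intros ha BF Hc Ht.
  assert (Hc' : forall x, curv chi 1 x = a). { intros; rewrite Hc, sqrt_1; field. }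
  set (T := dx chi 1). set (Tx := dxx chi 1). set (Txx := dxxx chi 1).
  assert (D : forall y, vder (chi 1) y (T y) /\ vder T y (Tx y) /\ vder Tx y (Txx y)
                        /\ vdot (T y) (T y) = 1 /\ vdot (Tx y) (Tx y) = a * a).
  { intros y. destruct (BF 1 y Rlt_0_1) as [_ [h1 [h2 [h3 [h4 _]]]]].
    split; [|split; [|split; [|split]]].
    - apply vder_of; auto.
    - apply vder_of; auto.
    - apply vder_of; auto.
    - apply vnorm_sq in h4. unfold T. rewrite h4; ring.
    - apply vnorm_sq. apply Hc'. }
  assert (F3 : forall y, vdot (T y) (Tx y) = 0).
  { intros y. destruct (D y) as [_ [d1 _]].
    pose proof (vder_dot _ _ _ _ _ d1 d1) as h.
    apply (const_deriv0 _ 1) in h. rewrite vdot_comm in h. lra. intros; apply D. }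
  assert (F4 : forall y, vdot (Tx y) (Txx y) = 0).
  { intros y. destruct (D y) as [_ [_ [d2 _]]].
    pose proof (vder_dot _ _ _ _ _ d2 d2) as h.
    apply (const_deriv0 _ (a*a)) in h. rewrite vdot_comm in h. lra. intros; apply D. }
  assert (F5 : forall y, vdot (T y) (Txx y) = - (a * a)).
  { intros y. destruct (D y) as [_ [d1 [d2 [_ h2]]]].
    pose proof (vder_dot _ _ _ _ _ d1 d2) as h.
    apply (const_deriv0 _ 0) in h. rewrite h2 in h. lra. intros; apply F3. }
  assert (Hn : forall y, normal chi 1 y = vscale (/a) (Tx y)).
  { intros y. unfold normal. rewrite Hc'. reflexivity. }
  intros x.
  destruct (D x) as [d0 [d1 [d2 [h1 h2]]]].
  assert (an : a <> 0) by lra.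
  assert (Gd : good (frame_at chi 1 x) 1).
  { unfold frame_at, good; simpl. rewrite Hn. split; [split; [|split]|split].
    - exact h1.
    - replace (vdot (vscale (/ a) (Tx x)) (vscale (/ a) (Tx x))) with (/a * /a * vdot (Tx x) (Tx x))
        by (vunf; ring). rewrite h2. field. auto.
    - replace (vdot (dx chi 1 x) (vscale (/ a) (Tx x))) with (/a * vdot (T x) (Tx x))
        by (unfold T; vunf; ring). rewrite F3; ring.
    - unfold binormal. rewrite Hn. veq.
    - ring. }
  assert (dn : vder (normal chi 1) x (vscale (/a) (Txx x))).
  { eapply vder_ext. intros y; symmetry; apply Hn. apply vder_cscale. exact d2. }
  set (n := normal chi 1 x) in *. set (b := binormal chi 1 x) in *.
  assert (Hb : b = vcross (T x) n) by reflexivity.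
  assert (Hnx : n = vscale (/a) (Tx x)) by apply Hn.
  assert (e1 : vdot (vscale (/a) (Txx x)) (T x) = -a).
  { replace (vdot (vscale (/a) (Txx x)) (T x)) with (/a * vdot (T x) (Txx x)) by (vunf; ring).
    rewrite F5. field; auto. }
  assert (e2 : vdot (vscale (/a) (Txx x)) n = 0).
  { rewrite Hnx. replace (vdot (vscale (/a) (Txx x)) (vscale (/ a) (Tx x))) with
      (/a * /a * vdot (Tx x) (Txx x)) by (vunf; ring). rewrite F4; ring. }
  assert (e3 : vdot (vscale (/a) (Txx x)) b = x/2).
  { pose proof (Ht x) as ht. unfold tors in ht. rewrite Hc' in ht.
    fold Tx Txx T in ht. replace (x / (2*1)) with (x/2) in ht by field. rewrite <- ht.
    rewrite Hb, Hnx. vunf. field. auto. }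
  assert (En : vscale (/a) (Txx x) = vadd (vscale (-a) (T x)) (vscale (x/2) b)).
  { rewrite (good_expand _ _ (vscale (/a) (Txx x)) Gd). unfold frame_at; simpl. fold T.
    fold n b. rewrite e1, e2, e3. veq. }
  assert (ETx : Tx x = vscale a n). { rewrite Hnx. apply V3_ext; vunf; field; auto. }
  split; [exact d0|split; [|split; [|split]]].
  - rewrite <- ETx. exact d1.
  - rewrite <- En. exact dn.
  - unfold binormal. eapply vder_eq. apply vder_cross. apply d1. apply dn.
    fold T. fold n. rewrite En, ETx. destruct Gd as [[g1 [g2 g3]] _]. simpl in g1, g2, g3.
    fold T in g1, g3. fold n in g2, g3.
    replace (vcross (vscale a n) n) with V0 by (unfold V0; veq).
    replace (vcross (T x) (vadd (vscale (- a) (T x)) (vscale (x / 2) b))) with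
      (vscale (x/2) (vcross (T x) (vcross (T x) n))) by (rewrite Hb; veq).
    rewrite bac_cab, g1, g3. unfold V0; veq.
  - exact Gd.
Qed.
Definition frenet_sys (T n b : R -> V3) (a : R) (tau : R -> R) :=
  forall y, vder T y (vscale a (n y)) /\
            vder n y (vadd (vscale (-a) (T y)) (vscale (tau y) (b y))) /\
            vder b y (vscale (- tau y) (n y)).

Lemma energy T1 n1 b1 T2 n2 b2 a tau e f :
  frenet_sys T1 n1 b1 a tau -> frenet_sys T2 n2 b2 a tau ->
  vdot (T1 0) e = vdot (T2 0) f -> vdot (n1 0) e = vdot (n2 0) f -> vdot (b1 0) e = vdot (b2 0) f ->
  forall x, vdot (T1 x) e = vdot (T2 x) f /\ vdot (n1 x) e = vdot (n2 x) f /\ vdot (b1 x) e = vdot (b2 x) f.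
Proof.
  intros S1 S2 i1 i2 i3.
  set (u1 := fun y => vdot (T1 y) e - vdot (T2 y) f).
  set (u2 := fun y => vdot (n1 y) e - vdot (n2 y) f).
  set (u3 := fun y => vdot (b1 y) e - vdot (b2 y) f).
  set (E := fun y => u1 y * u1 y + u2 y * u2 y + u3 y * u3 y).
  assert (DE : forall y, is_derive E y 0).
  { intros y. destruct (S1 y) as [p1 [p2 p3]]. destruct (S2 y) as [q1 [q2 q3]].
    assert (D1 : is_derive u1 y (a * u2 y)).
    { eapply deq. apply dminus; apply vder_dot_const; eauto. unfold u2; vunf; ring. }
    assert (D2 : is_derive u2 y (-a * u1 y + tau y * u3 y)).
    { eapply deq. apply dminus; apply vder_dot_const; eauto. unfold u1, u3; vunf; ring. }
    assert (D3 : is_derive u3 y (- tau y * u2 y)).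
    { eapply deq. apply dminus; apply vder_dot_const; eauto. unfold u2; vunf; ring. }
    unfold E. eapply deq. apply dplus; [apply dplus|]; apply dmul; eauto. ring. }
  assert (E0 : E 0 = 0). { unfold E, u1, u2, u3. rewrite i1, i2, i3. ring. }
  intros x. assert (Ex : E x = 0). { rewrite (dzero_const E DE x 0). exact E0. }
  unfold E in Ex.
  assert (u1 x = 0 /\ u2 x = 0 /\ u3 x = 0) as [z1 [z2 z3]] by (split; [|split]; nra).
  unfold u1, u2, u3 in *. split; [|split]; lra.
Qed.

Lemma frame_uniq T1 n1 b1 T2 n2 b2 a tau s :
  frenet_sys T1 n1 b1 a tau -> frenet_sys T2 n2 b2 a tau ->
  good (mkFr (T1 0) (n1 0) (b1 0)) 1 -> good (mkFr (T2 0) (n2 0) (b2 0)) s ->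
  let R := Rmap (mkFr (T1 0) (n1 0) (b1 0)) (mkFr (T2 0) (n2 0) (b2 0)) in
  forall x, T1 x = R (T2 x) /\ n1 x = R (n2 x) /\ b1 x = R (b2 x).
Proof.
  intros S1 S2 G1 G2 R x.
  destruct (good_dots _ _ G1) as [a1 [a2 [a3 [a4 [a5 a6]]]]].
  destruct (good_dots _ _ G2) as [c1 [c2 c3 ]]. destruct c3 as [c3 [c4 [c5 c6]]].
  simpl in *.
  assert (K : forall e f, vdot (T1 0) e = vdot (T2 0) f -> vdot (n1 0) e = vdot (n2 0) f ->
              vdot (b1 0) e = vdot (b2 0) f -> forall x, vdot (T1 x) e = vdot (T2 x) f /\
              vdot (n1 x) e = vdot (n2 x) f /\ vdot (b1 x) e = vdot (b2 x) f).
  { intros e f h1 h2 h3. apply (energy _ _ _ _ _ _ a tau); auto. }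
  assert (sym : forall u v, vdot u v = vdot v u) by (intros; apply vdot_comm).
  destruct (K (T1 0) (T2 0)) with (x := x) as [k1 [k2 k3]].
  { congruence. } { rewrite (sym (n1 0)), (sym (n2 0)). congruence. }
  { rewrite (sym (b1 0)), (sym (b2 0)). congruence. }
  destruct (K (n1 0) (n2 0)) with (x := x) as [l1 [l2 l3]].
  { congruence. } { congruence. } { rewrite (sym (b1 0)), (sym (b2 0)). congruence. }
  destruct (K (b1 0) (b2 0)) with (x := x) as [m1 [m2 m3]].
  { congruence. } { congruence. } { congruence. }
  pose proof (good_expand _ _ (T1 x) G1) as ET. pose proof (good_expand _ _ (n1 x) G1) as EN.
  pose proof (good_expand _ _ (b1 x) G1) as EB. simpl in ET, EN, EB.
  unfold R, Rmap; simpl. split; [|split].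
  - rewrite ET at 1. rewrite k1, l1, m1. reflexivity.
  - rewrite EN at 1. rewrite k2, l2, m2. reflexivity.
  - rewrite EB at 1. rewrite k3, l3, m3. reflexivity.
Qed.
Lemma comp_le v : Rabs (v1 v) <= vnorm v /\ Rabs (v2 v) <= vnorm v /\ Rabs (v3 v) <= vnorm v.
Proof. unfold vnorm. rewrite <- !sqrt_Rsqr_abs. unfold Rsqr.
  split; [|split]; apply sqrt_le_1_alt; vunf; nra. Qed.

Lemma CS u v : Rabs (vdot u v) <= vnorm u * vnorm v.
Proof. unfold vnorm. rewrite <- sqrt_mult by apply vdot_ge0. rewrite <- sqrt_Rsqr_abs.
  apply sqrt_le_1_alt. unfold Rsqr. pose proof (lagrange u v). pose proof (vdot_ge0 (vcross u v)).
  nra. Qed.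

Lemma sq_le x y : 0 <= x -> 0 <= y -> x * x <= y * y -> x <= y.
Proof. intros; nra. Qed.

Lemma vnorm_sqr v : vnorm v * vnorm v = vdot v v.
Proof. unfold vnorm. apply sqrt_sqrt, vdot_ge0. Qed.

Lemma vtri u v : vnorm (vadd u v) <= vnorm u + vnorm v.
Proof. apply sq_le. apply vnorm_ge0. pose proof (vnorm_ge0 u); pose proof (vnorm_ge0 v); lra.
  rewrite vnorm_sqr. replace (vdot (vadd u v) (vadd u v)) with (vdot u u + 2 * vdot u v + vdot v v)
    by (vunf; ring). rewrite <- !vnorm_sqr. pose proof (CS u v). pose proof (Rle_abs (vdot u v)). nra. Qed.

Lemma vnorm_scale c v : vnorm (vscale c v) = Rabs c * vnorm v.
Proof. unfold vnorm. replace (vdot (vscale c v) (vscale c v)) with (Rsqr c * vdot v v) by (unfold Rsqr; vunf; ring).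
  rewrite sqrt_mult_alt. rewrite sqrt_Rsqr_abs. reflexivity. apply Rle_0_sqr. Qed.

Lemma vnorm_opp v : vnorm (vopp v) = vnorm v.
Proof. unfold vopp. rewrite vnorm_scale. replace (Rabs (-1)) with 1. ring. unfold Rabs; destruct Rcase_abs; lra. Qed.

Lemma vnorm0 v : vnorm v = 0 -> v = V0.
Proof. intros H. apply vnorm_sq in H. unfold V0. vunf.
  apply V3_ext; simpl; nra. Qed.

Lemma small_zero v : (forall eps, 0 < eps -> vnorm v < eps) -> v = V0.
Proof. intros H. apply vnorm0. pose proof (vnorm_ge0 v).
  destruct (Req_dec (vnorm v) 0); auto. specialize (H (vnorm v)). lra. Qed.

Lemma vsub_zero u v : vsub u v = V0 -> u = v.
Proof. intros H. apply V3_ext; unfold V0 in H; vunf; injection H; lra. Qed.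

Lemma Rmap_norm E F s v : good E 1 -> good F s -> vnorm (Rmap E F v) = vnorm v.
Proof. intros. unfold vnorm. rewrite (Rmap_dot E F s); auto. Qed.

Definition lim0 (h : R -> V3) (c : V3) := forall eps, 0 < eps -> exists delta, 0 < delta /\
  forall t, 0 < t < delta -> vnorm (vsub (h t) c) < eps.

Lemma lim0_transfer h1 h2 c1 c2 E F s p :
  good E 1 -> good F s ->
  (forall t, 0 < t -> h1 t = vadd (Rmap E F (h2 t)) (vscale (sqrt t) p)) ->
  lim0 h1 c1 -> lim0 h2 c2 -> c1 = Rmap E F c2.
Proof.
  intros GE GF Hh L1 L2. apply vsub_zero, small_zero. intros eps he.
  destruct (L1 (eps/3)) as [d1 [hd1 H1]]. lra.
  destruct (L2 (eps/3)) as [d2 [hd2 H2]]. lra.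
  set (q := eps / (3 * (vnorm p + 1))).
  assert (hq : 0 < q). { unfold q. pose proof (vnorm_ge0 p). apply Rdiv_lt_0_compat; lra. }
  assert (hm : 0 < Rmin (Rmin d1 d2) (q * q)) by (apply Rmin_glb_lt; [apply Rmin_glb_lt|]; nra).
  pose proof (Rmin_l (Rmin d1 d2) (q*q)). pose proof (Rmin_r (Rmin d1 d2) (q*q)).
  pose proof (Rmin_l d1 d2). pose proof (Rmin_r d1 d2).
  set (m := Rmin (Rmin d1 d2) (q * q)) in *. set (m' := Rmin d1 d2) in *.
  set (t := m / 2).
  assert (ht0 : 0 < t) by (unfold t; lra).
  assert (ht1 : t < d1) by (unfold t; lra).
  assert (ht2 : t < d2) by (unfold t; lra).
  assert (ht3 : t < q * q) by (unfold t; lra).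
  assert (hs : sqrt t < q). { rewrite <- (sqrt_square q) by lra. apply sqrt_lt_1_alt. lra. }
  assert (E1 : vsub c1 (Rmap E F c2) =
     vadd (vadd (vopp (vsub (h1 t) c1)) (Rmap E F (vsub (h2 t) c2))) (vscale (sqrt t) p)).
  { rewrite Rmap_sub. rewrite (Hh t ht0). veq. }
  rewrite E1. eapply Rle_lt_trans. apply vtri. eapply Rle_lt_trans.
  apply Rplus_le_compat_r. apply vtri.
  rewrite vnorm_opp, (Rmap_norm E F s) by auto. rewrite vnorm_scale.
  rewrite Rabs_right by (apply Rle_ge, sqrt_pos).
  specialize (H1 t (conj ht0 ht1)). specialize (H2 t (conj ht0 ht2)).
  assert (sqrt t * vnorm p < eps / 3).
  { pose proof (vnorm_ge0 p). pose proof (sqrt_pos t).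
    apply Rle_lt_trans with (q * vnorm p). apply Rmult_le_compat_r; lra.
    unfold q. apply Rmult_lt_reg_r with (vnorm p + 1). lra.
    field_simplify; try lra. }
  lra.
Qed.

Lemma rot_add k phi u w : rot k phi (vadd u w) = vadd (rot k phi u) (rot k phi w).
Proof. unfold rot; veq. Qed.
Lemma rot_scale k phi c u : rot k phi (vscale c u) = vscale c (rot k phi u).
Proof. unfold rot; veq. Qed.
Lemma rot_PI k v : rot k PI v = vadd (vopp v) (vscale (2 * vdot k v) k).
Proof. unfold rot. rewrite cos_PI, sin_PI. veq. Qed.

Lemma lin_eq (L1 L2 : V3 -> V3) A B :
  (forall u w, L1 (vadd u w) = vadd (L1 u) (L1 w)) -> (forall c u, L1 (vscale c u) = vscale c (L1 u)) ->
  (forall u w, L2 (vadd u w) = vadd (L2 u) (L2 w)) -> (forall c u, L2 (vscale c u) = vscale c (L2 u)) ->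
  vcross A B <> V0 ->
  L1 A = L2 A -> L1 B = L2 B -> L1 (vcross A B) = L2 (vcross A B) -> forall v, L1 v = L2 v.
Proof.
  intros a1 s1 a2 s2 hN hA hB hC v. set (N := vcross A B) in *.
  assert (hd : vdot A (vcross B N) <> 0).
  { replace (vdot A (vcross B N)) with (vdot N N) by (unfold N; vunf; ring).
    intros h. apply hN. apply vnorm0. unfold vnorm. rewrite h. apply sqrt_0. }
  pose proof (cramer A B N v) as C.
  assert (Ev : v = vscale (/ vdot A (vcross B N)) (vscale (vdot A (vcross B N)) v)).
  { apply V3_ext; vunf; field; auto. }
  rewrite Ev, C, s1, s2, !a1, !a2, !s1, !s2, hA, hB, hC. reflexivity.
Qed.
Definition vlim (z : Rbar) (f : R -> V3) (L : V3) :=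
  is_lim (fun y => v1 (f y)) z (v1 L) /\ is_lim (fun y => v2 (f y)) z (v2 L) /\
  is_lim (fun y => v3 (f y)) z (v3 L).

Lemma slim_unique (f : R -> R) z l1 l2 : is_lim f z (Finite l1) -> is_lim f z (Finite l2) -> l1 = l2.
Proof. intros h1 h2. apply is_lim_unique in h1, h2. rewrite h1 in h2. injection h2; auto. Qed.

Lemma slim_plus (f g : R -> R) z (a b : R) : is_lim f z a -> is_lim g z b -> is_lim (fun y => f y + g y) z (a + b).
Proof. intros. apply is_lim_plus'; auto. Qed.
Lemma slim_minus (f g : R -> R) z (a b : R) : is_lim f z a -> is_lim g z b -> is_lim (fun y => f y - g y) z (a - b).
Proof. intros. apply is_lim_minus'; auto. Qed.
Lemma slim_mult (f g : R -> R) z (a b : R) : is_lim f z a -> is_lim g z b -> is_lim (fun y => f y * g y) z (a * b).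
Proof. intros. apply (is_lim_mult f g z a b); auto. simpl; auto. Qed.
Lemma slim_const (a : R) (z : Rbar) : is_lim (fun _ => a) z a.
Proof. apply is_lim_const. Qed.
Lemma slim_ext (f g : R -> R) (z l : Rbar) : (forall y, f y = g y) -> is_lim f z l -> is_lim g z l.
Proof. intros. eapply is_lim_ext; eauto. Qed.

Lemma vlim_const z c : vlim z (fun _ => c) c.
Proof. split; [|split]; apply slim_const. Qed.
Lemma vlim_ext z f g L : (forall y, f y = g y) -> vlim z f L -> vlim z g L.
Proof. intros E [h1 [h2 h3]]. split; [|split]; eapply slim_ext; eauto; intros; simpl; rewrite E; auto. Qed.
Lemma vlim_unique z f L1 L2 : vlim z f L1 -> vlim z f L2 -> L1 = L2.
Proof. intros [a1 [a2 a3]] [b1 [b2 b3]]. apply V3_ext; eapply slim_unique; eauto. Qed.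

Lemma vlim_dot z f g L K : vlim z f L -> vlim z g K -> is_lim (fun y => vdot (f y) (g y)) z (vdot L K).
Proof. intros [a1 [a2 a3]] [b1 [b2 b3]]. unfold vdot.
  apply slim_plus; [apply slim_plus|]; apply slim_mult; auto. Qed.
Lemma vlim_cross z f g L K : vlim z f L -> vlim z g K -> vlim z (fun y => vcross (f y) (g y)) (vcross L K).
Proof. intros [a1 [a2 a3]] [b1 [b2 b3]]. unfold vcross; simpl.
  split; [|split]; apply slim_minus; apply slim_mult; auto. Qed.
Lemma vlim_add z f g L K : vlim z f L -> vlim z g K -> vlim z (fun y => vadd (f y) (g y)) (vadd L K).
Proof. intros [a1 [a2 a3]] [b1 [b2 b3]]. unfold vadd; simpl. split; [|split]; apply slim_plus; auto. Qed.
Lemma vlim_scal z (h : R -> R) f (c : R) L : is_lim h z c -> vlim z f L -> vlim z (fun y => vscale (h y) (f y)) (vscale c L).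
Proof. intros H [a1 [a2 a3]]. unfold vscale; simpl. split; [|split]; apply slim_mult; auto. Qed.
Lemma vlim_Rmap z E F f L : vlim z f L -> vlim z (fun y => Rmap E F (f y)) (Rmap E F L).
Proof. intros H. unfold Rmap. apply vlim_add; [apply vlim_add|]; apply vlim_scal;
  try apply vlim_const; apply vlim_dot; auto; apply vlim_const. Qed.

Lemma vlim_pinf f L : vlim_pinfty f L -> vlim p_infty f L.
Proof. intros H. split; [|split]; apply is_lim_spec; intros eps;
  destruct (H eps (cond_pos eps)) as [M HM]; exists M; intros y hy;
  pose proof (comp_le (vsub (f y) L)) as [c1 [c2 c3]]; specialize (HM y hy);
  [replace (v1 (f y) - v1 L) with (v1 (vsub (f y) L)) by (vunf; ring)
  |replace (v2 (f y) - v2 L) with (v2 (vsub (f y) L)) by (vunf; ring)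
  |replace (v3 (f y) - v3 L) with (v3 (vsub (f y) L)) by (vunf; ring)]; lra. Qed.
Lemma vlim_minf f L : vlim_minfty f L -> vlim m_infty f L.
Proof. intros H. split; [|split]; apply is_lim_spec; intros eps;
  destruct (H eps (cond_pos eps)) as [M HM]; exists M; intros y hy;
  pose proof (comp_le (vsub (f y) L)) as [c1 [c2 c3]]; specialize (HM y hy);
  [replace (v1 (f y) - v1 L) with (v1 (vsub (f y) L)) by (vunf; ring)
  |replace (v2 (f y) - v2 L) with (v2 (vsub (f y) L)) by (vunf; ring)
  |replace (v3 (f y) - v3 L) with (v3 (vsub (f y) L)) by (vunf; ring)]; lra. Qed.
Lemma minf_to_pinf f L : vlim_minfty f L -> vlim_pinfty (fun y => f (-y)) L.
Proof. intros H eps he. destruct (H eps he) as [M HM]. exists (-M). intros x hx. apply HM. lra. Qed.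
Lemma pinf_to_minf f L : vlim_pinfty f L -> vlim_minfty (fun y => f (-y)) L.
Proof. intros H eps he. destruct (H eps he) as [M HM]. exists (-M). intros x hx. apply HM. lra. Qed.

Lemma slim_minf_spec (f : R -> R) (l : R) : is_lim f m_infty l -> forall eps, 0 < eps ->
  exists M, forall y, y < M -> Rabs (f y - l) < eps.
Proof. intros H eps he. apply is_lim_spec in H. destruct (H (mkposreal eps he)) as [M HM].
  exists M. intros; apply HM; auto. Qed.
Lemma slim_pinf_spec (f : R -> R) (l : R) : is_lim f p_infty l -> forall eps, 0 < eps ->
  exists M, forall y, M < y -> Rabs (f y - l) < eps.
Proof. intros H eps he. apply is_lim_spec in H. destruct (H (mkposreal eps he)) as [M HM].
  exists M. intros; apply HM; auto. Qed.
Lemma asym_minus (c : R -> R -> V3) (T : R -> V3) (A : V3) :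
  (forall t, 0 < t -> c t (-1) = vscale (sqrt t) (c 1 (-1 / sqrt t))) ->
  lim0 (fun t => c t (-1)) (c 0 (-1)) ->
  (forall y, vder (c 1) y (T y)) ->
  vdot A A = 1 ->
  is_lim (fun y => vdot (T y) A) m_infty 1 ->
  vdot (c 0 (-1)) A <= -1.
Proof.
  intros Hs Hl Hd HA HT.
  assert (nA : vnorm A = 1). { unfold vnorm. rewrite HA. apply sqrt_1. }
  assert (key : forall eps, 0 < eps -> vdot (c 0 (-1)) A < -1 + eps).
  2: { destruct (Rle_or_lt (vdot (c 0 (-1)) A) (-1)) as [h|h]; auto.
       specialize (key (vdot (c 0 (-1)) A + 1)). lra. }
  intros eps he. set (e := eps / 3).
  assert (he' : 0 < e) by (unfold e; lra).
  destruct (slim_minf_spec _ _ HT e he') as [M HM].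
  set (M' := M - 1). set (g := fun y => vdot (c 1 y) A).
  assert (Dg : forall y, is_derive g y (vdot (T y) A)).
  { intros y. unfold g. apply vder_dot_const. apply Hd. }
  assert (Hg : forall y, y < M' -> g y <= g M' - (1 - e) * (M' - y)).
  { intros y hy. destruct (MVT_gen g y M' (fun z => vdot (T z) A)) as [z [hz Ez]].
    - intros; apply Dg.
    - intros w _. apply continuity_pt_filterlim.
      apply (ex_derive_continuous (K:=R_AbsRing) (V:=R_NormedModule) g w). eexists; apply Dg.
    - rewrite Rmin_left in hz by lra. rewrite Rmax_right in hz by lra.
      assert (hz' : z < M) by (unfold M' in *; lra).
      specialize (HM z hz'). apply Rabs_def2 in HM.
      assert (vdot (T z) A * (M' - y) >= (1 - e) * (M' - y)).
      { apply Rle_ge, Rmult_le_compat_r; lra. }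
      lra. }
  set (K := g M' - (1 - e) * M').
  destruct (Hl e he') as [d [hd Hd0]].
  pose proof (sqrt_lt_R0 d hd) as hsd.
  assert (hM1 : 0 < / (Rabs M' + 1)) by (apply Rinv_0_lt_compat; pose proof (Rabs_pos M'); lra).
  assert (hK1 : 0 < e / (Rabs K + 1)) by (apply Rdiv_lt_0_compat; [lra|pose proof (Rabs_pos K); lra]).
  assert (hm : 0 < Rmin (Rmin (sqrt d) (/ (Rabs M' + 1))) (e / (Rabs K + 1)))
    by (apply Rmin_glb_lt; [apply Rmin_glb_lt|]; lra).
  pose proof (Rmin_l (Rmin (sqrt d) (/ (Rabs M' + 1))) (e / (Rabs K + 1))).
  pose proof (Rmin_r (Rmin (sqrt d) (/ (Rabs M' + 1))) (e / (Rabs K + 1))).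
  pose proof (Rmin_l (sqrt d) (/ (Rabs M' + 1))). pose proof (Rmin_r (sqrt d) (/ (Rabs M' + 1))).
  set (m := Rmin (Rmin (sqrt d) (/ (Rabs M' + 1))) (e / (Rabs K + 1))) in *.
  set (s := m / 2).
  assert (hs0 : 0 < s) by (unfold s; lra).
  assert (hs1 : s < sqrt d) by (unfold s; lra).
  assert (hs2 : s < / (Rabs M' + 1)) by (unfold s; lra).
  assert (hs3 : s < e / (Rabs K + 1)) by (unfold s; lra).
  set (t := s * s).
  assert (ht : 0 < t < d).
  { unfold t. split. nra. rewrite <- (sqrt_sqrt d) by lra. nra. }
  assert (hst : sqrt t = s) by (unfold t; apply sqrt_square; lra).
  assert (hy : -1 / s < M').
  { assert (s * (Rabs M' + 1) < 1).
    { apply Rmult_lt_reg_r with (/ (Rabs M' + 1)). auto.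
      rewrite Rmult_assoc, Rinv_r, Rmult_1_r, Rmult_1_l; auto. pose proof (Rabs_pos M'); lra. }
    pose proof (Rabs_pos M'). pose proof (Rle_abs (-M')). rewrite Rabs_Ropp in *.
    apply Rmult_lt_reg_l with s; auto. field_simplify; try lra. nra. }
  pose proof (Hg _ hy) as Hg1.
  assert (E1 : vdot (c t (-1)) A = s * g (-1 / s)).
  { rewrite (Hs t (proj1 ht)), hst. unfold g. vunf; ring. }
  assert (E2 : s * g (-1 / s) <= s * K - (1 - e)).
  { unfold K. apply Rle_trans with (s * (g M' - (1 - e) * (M' - -1 / s))).
    apply Rmult_le_compat_l; lra. right. field. lra. }
  assert (E3 : s * K < e).
  { apply Rle_lt_trans with (s * (Rabs K + 1)). pose proof (Rle_abs K). nra.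
    apply Rmult_lt_reg_r with (/ (Rabs K + 1)). apply Rinv_0_lt_compat; pose proof (Rabs_pos K); lra.
    rewrite Rmult_assoc, Rinv_r, Rmult_1_r. exact hs3. pose proof (Rabs_pos K); lra. }
  specialize (Hd0 t ht).
  pose proof (CS (vsub (c t (-1)) (c 0 (-1))) A) as hc. rewrite nA, Rmult_1_r in hc.
  pose proof (Rle_abs (- vdot (vsub (c t (-1)) (c 0 (-1))) A)) as hc2. rewrite Rabs_Ropp in hc2.
  assert (E4 : vdot (c 0 (-1)) A = vdot (c t (-1)) A - vdot (vsub (c t (-1)) (c 0 (-1))) A)
    by (vunf; ring).
  unfold e in *. lra.
Qed.
Lemma trig_choice (al be nn : R) : 0 < nn -> nn = al * al + be * be ->
  let th := asin (Rabs al / (1 * sqrt nn)) in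
  exists phi, (phi = 2 * th \/ phi = - (2 * th)) /\
    cos phi = 1 - 2 * al * al / nn /\ sin phi = - 2 * al * be / nn.
Proof.
  intros hn hnn th.
  pose proof (sqrt_lt_R0 nn hn) as hs. pose proof (sqrt_sqrt nn (Rlt_le _ _ hn)) as hss.
  set (q := sqrt nn) in *.
  assert (hx : Rabs al / (1 * q) * (Rabs al / (1 * q)) = al * al / nn).
  { rewrite <- hss. replace (Rabs al / (1*q) * (Rabs al / (1*q))) with (Rabs al * Rabs al / (q*q)) by (field; lra).
    rewrite <- Rabs_mult, Rabs_right by nra. reflexivity. }
  assert (hb : -1 <= Rabs al / (1 * q) <= 1).
  { assert (0 <= Rabs al / (1 * q)) by (apply Rdiv_le_0_compat; [apply Rabs_pos| lra]).
    assert (al * al / nn <= 1). { apply Rmult_le_reg_r with nn; auto. field_simplify; nra. }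
    nra. }
  assert (sth : sin th = Rabs al / (1 * q)) by (apply sin_asin; auto).
  assert (cth : cos th = Rabs be / q).
  { unfold th. rewrite cos_asin by auto. unfold Rsqr.
    replace (1 - Rabs al / (1 * q) * (Rabs al / (1 * q))) with (Rsqr (Rabs be / q)).
    apply sqrt_Rsqr. apply Rdiv_le_0_compat; [apply Rabs_pos|lra].
    rewrite hx. unfold Rsqr. replace (Rabs be / q * (Rabs be / q)) with (Rabs be * Rabs be / (q*q)) by (field; lra).
    rewrite <- Rabs_mult, Rabs_right by nra. rewrite hss. field_simplify; nra. }
  assert (c2 : cos (2 * th) = 1 - 2 * al * al / nn).
  { rewrite cos_2a_sin, sth. rewrite Rmult_assoc, hx. field; lra. }
  assert (s2 : sin (2 * th) = 2 * Rabs al * Rabs be / nn).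
  { rewrite sin_2a, sth, cth. rewrite <- hss. field. lra. }
  destruct (Rle_or_lt (al * be) 0) as [h|h].
  - exists (2 * th). split; [left; auto|]. split; auto. rewrite s2.
    replace (2 * Rabs al * Rabs be) with (2 * (Rabs al * Rabs be)) by ring.
    rewrite <- Rabs_mult, Rabs_left1 by auto. field; lra.
  - exists (- (2 * th)). split; [right; auto|]. rewrite cos_neg, sin_neg. split; auto. rewrite s2.
    replace (2 * Rabs al * Rabs be) with (2 * (Rabs al * Rabs be)) by ring.
    rewrite <- Rabs_mult, Rabs_right by lra. field; lra.
Qed.

Lemma final_rot (A Ap Am w im : V3) (M : V3 -> V3) :
  vdot A A = 1 -> ON w im -> vcross w im = A ->
  vcross Ap Am <> V0 -> vdot A (vcross Ap Am) = 0 ->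
  (forall v, M v = vsub v (vscale (2 * vdot v (vcross Ap Am) / vdot (vcross Ap Am) (vcross Ap Am)) (vcross Ap Am))) ->
  exists Rf, rotation_2theta A Ap Am (mkCV w im) Rf /\ Rf (vopp A) = vopp A /\
     mkCV (M w) (M im) = capply Rf (cconj (mkCV w im)).
Proof.
  intros hA hON hC hN hAN HM.
  pose proof hON as [ww [ii wi]].
  assert (Aw : vdot A w = 0) by (rewrite <- hC; vunf; ring).
  assert (Ai : vdot A im = 0) by (rewrite <- hC; vunf; ring).
  assert (Axw : vcross A w = im).
  { rewrite <- hC. replace (vcross (vcross w im) w) with (vsub (vscale (vdot w w) im) (vscale (vdot im w) w)) by veq.
    rewrite ww, vdot_comm, wi. veq. }
  assert (Axi : vcross A im = vopp w).
  { rewrite <- Axw, bac_cab, Aw, hA. veq. }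
  assert (G : good (mkFr w im A) 1).
  { unfold good; simpl. split; auto. split; [rewrite hC; veq | ring]. }
  set (N := vcross Ap Am) in *.
  pose proof (good_expand _ _ N G) as EN. simpl in EN.
  rewrite (vdot_comm N A), hAN in EN.
  set (al := vdot N w) in *. set (be := vdot N im) in *.
  assert (EN' : N = vadd (vscale al w) (vscale be im)) by (rewrite EN at 1; veq).
  assert (hnn : vdot N N = al * al + be * be).
  { rewrite EN' at 1 2. replace (vdot (vadd (vscale al w) (vscale be im)) (vadd (vscale al w) (vscale be im)))
     with (al*al*vdot w w + 2*al*be*vdot w im + be*be*vdot im im) by (vunf; ring). rewrite ww, ii, wi; ring. }
  assert (hn : 0 < vdot N N).
  { pose proof (vdot_ge0 N). destruct (Req_dec (vdot N N) 0) as [h|h]; [|lra].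
    exfalso. apply hN. apply vnorm0. unfold vnorm. rewrite h. apply sqrt_0. }
  set (nn := vdot N N) in *.
  assert (hth : angle_vec_plane w Ap Am = asin (Rabs al / (1 * sqrt nn))).
  { unfold angle_vec_plane. fold N. unfold vnorm at 1. rewrite ww, sqrt_1. fold nn.
    rewrite (vdot_comm w N). reflexivity. }
  destruct (trig_choice al be nn hn hnn) as [phi [hphi [cp sp]]].
  exists (rot A phi). split; [|split].
  - unfold rotation_2theta. simpl. rewrite hth. exists phi. split; auto.
  - unfold rot. replace (vdot A (vopp A)) with (- vdot A A) by (vunf; ring). rewrite hA.
    replace (vcross A (vopp A)) with V0 by (unfold V0; veq). veq.
  - unfold capply, cconj; simpl. f_equal.
    + rewrite HM. rewrite (vdot_comm w N). fold al.
      unfold rot. rewrite Axw, Aw, cp, sp. rewrite EN'. apply V3_ext; vunf; field; lra.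
    + rewrite HM. rewrite (vdot_comm im N). fold be.
      unfold rot. replace (vdot A (vopp im)) with (- vdot A im) by (vunf; ring).
      replace (vcross A (vopp im)) with (vopp (vcross A im)) by veq.
      rewrite Axi, Ai, cp, sp. rewrite EN'. apply V3_ext; vunf; field_simplify; try lra;
      rewrite hnn; field; lra.
Qed.
Lemma RInt_half x : RInt (fun s => s / (2 * 1)) 0 x = x * x / 4.
Proof.
  assert (H : is_RInt (fun s => s / (2 * 1)) 0 x (minus ((fun s => s * s / 4) x) ((fun s => s * s / 4) 0))).
  { apply (is_RInt_derive (V:=R_CompleteNormedModule) (fun s => s*s/4) (fun s => s/(2*1)) 0 x).
    - intros y _. auto_derive. auto. field.
    - intros y _. apply (ex_derive_continuous (K:=R_AbsRing) (V:=R_NormedModule)). auto_derive. auto. }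
  apply (is_RInt_unique (V:=R_CompleteNormedModule)) in H. rewrite H. unfold minus, plus, opp; simpl. field.
Qed.

Lemma unpack Ap Am a chi : 0 < a -> selfsimilar_solution Ap Am a chi ->
  frenet_sys (dx chi 1) (normal chi 1) (binormal chi 1) a (fun y => y/2) /\
  (forall x, good (frame_at chi 1 x) 1) /\
  (forall y, vder (chi 1) y (dx chi 1 y)) /\
  (forall t x, 0 < t -> chi t x = vscale (sqrt t) (chi 1 (x / sqrt t))) /\
  (forall x, lim0 (fun t => chi t x) (chi 0 x)) /\
  (forall x, 0 <= x -> chi 0 x = vscale x Ap) /\ (forall x, x <= 0 -> chi 0 x = vscale x Am) /\
  (forall x, phase chi a 1 x = x * x / 4 + a^2 * ln (Rabs x)).
Proof.
  intros ha [BF [[G HG] [D1 [D2 [L [Hc Ht]]]]]].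
  pose proof (frenet chi a ha BF (fun x => Hc 1 x Rlt_0_1) (fun x => Ht 1 x Rlt_0_1)) as F.
  split; [|split; [|split; [|split; [|split; [|split; [|split]]]]]].
  - intros y. destruct (F y) as [_ [f1 [f2 [f3 _]]]]. split; [|split]; auto.
  - intros x. apply F.
  - intros y. apply F.
  - intros t x ht. rewrite (HG t x ht). f_equal. rewrite (HG 1 (x / sqrt t) Rlt_0_1).
    rewrite sqrt_1. replace (x / sqrt t / 1) with (x / sqrt t) by (unfold Rdiv; rewrite Rinv_1; ring). veq.
  - intros x eps he. destruct (L x eps he) as [d [hd Hd]]. exists d; split; auto.
  - auto.
  - auto.
  - intros x. unfold phase. rewrite sqrt_1, ln_1.
    rewrite (RInt_ext (fun s => tors chi 1 s) (fun s => s / (2 * 1))).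
    rewrite RInt_half. ring. intros; apply Ht; lra.
Qed.

Lemma modframe_props chi a x : good (frame_at chi 1 x) 1 ->
  ON (cre (modframe chi a 1 x)) (cim (modframe chi a 1 x)) /\
  vcross (cre (modframe chi a 1 x)) (cim (modframe chi a 1 x)) = dx chi 1 x.
Proof.
  intros G. destruct (good_dots _ _ G) as [a1 [a2 [a3 [a4 [a5 a6]]]]].
  destruct (good_crosses _ _ G) as [c1 [c2 c3]]. unfold frame_at in *; simpl in *.
  unfold modframe; cbv zeta; simpl.
  set (P := phase chi a 1 x). set (n := normal chi 1 x) in *. set (b := binormal chi 1 x) in *.
  pose proof (sin2_cos2 P) as sc. unfold Rsqr in sc.
  split; [split; [|split]|].
  - replace (vdot (vsub (vscale (cos P) n) (vscale (sin P) b)) (vsub (vscale (cos P) n) (vscale (sin P) b)))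
      with (cos P * cos P * vdot n n - 2 * cos P * sin P * vdot n b + sin P * sin P * vdot b b) by (vunf; ring).
    rewrite a2, a3, a6. lra.
  - replace (vdot (vadd (vscale (sin P) n) (vscale (cos P) b)) (vadd (vscale (sin P) n) (vscale (cos P) b)))
      with (sin P * sin P * vdot n n + 2 * cos P * sin P * vdot n b + cos P * cos P * vdot b b) by (vunf; ring).
    rewrite a2, a3, a6. lra.
  - replace (vdot (vsub (vscale (cos P) n) (vscale (sin P) b)) (vadd (vscale (sin P) n) (vscale (cos P) b)))
      with (cos P * sin P * vdot n n + (cos P * cos P - sin P * sin P) * vdot n b - sin P * cos P * vdot b b)
      by (vunf; ring).
    rewrite a2, a3, a6. ring.
  - replace (vcross (vsub (vscale (cos P) n) (vscale (sin P) b)) (vadd (vscale (sin P) n) (vscale (cos P) b)))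
      with (vscale (cos P * cos P + sin P * sin P) (vcross n b)) by veq.
    rewrite c2. replace (cos P * cos P + sin P * sin P) with 1 by lra. veq.
Qed.

Lemma Bstruct (c : R -> R -> V3) (T Re Im : R -> V3) (A ReB ImB : V3) :
  (forall t, 0 < t -> c t (-1) = vscale (sqrt t) (c 1 (-1 / sqrt t))) ->
  lim0 (fun t => c t (-1)) (c 0 (-1)) ->
  (forall y, vder (c 1) y (T y)) ->
  (forall y, ON (Re y) (Im y) /\ vcross (Re y) (Im y) = T y) ->
  vlim m_infty Re ReB -> vlim m_infty Im ImB ->
  c 0 (-1) = vopp A -> vdot A A = 1 ->
  ON ReB ImB /\ vcross ReB ImB = A.
Proof.
  intros Hs Hl Hd Hf LR LI HA hA.
  assert (K : forall (f : R -> R) (l : R), (forall y, f y = l) -> forall l' : R, is_lim f m_infty l' -> l = l').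
  { intros f l E l' H. apply (slim_unique f m_infty). eapply slim_ext. 2: apply (slim_const l).
    intros; simpl; rewrite E; auto. exact H. }
  assert (o1 : vdot ReB ReB = 1).
  { symmetry. apply (K (fun y => vdot (Re y) (Re y))). intros; apply Hf. apply vlim_dot; auto. }
  assert (o2 : vdot ImB ImB = 1).
  { symmetry. apply (K (fun y => vdot (Im y) (Im y))). intros; apply Hf. apply vlim_dot; auto. }
  assert (o3 : vdot ReB ImB = 0).
  { symmetry. apply (K (fun y => vdot (Re y) (Im y))). intros; apply Hf. apply vlim_dot; auto. }
  set (A' := vcross ReB ImB).
  assert (hA' : vdot A' A' = 1). { unfold A'. rewrite lagrange, o1, o2, o3. ring. }
  assert (LT : vlim m_infty T A').
  { eapply vlim_ext. intros y. apply Hf. apply vlim_cross; auto. }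
  assert (LTA : is_lim (fun y => vdot (T y) A') m_infty 1).
  { rewrite <- hA'. apply vlim_dot; auto. apply vlim_const. }
  pose proof (asym_minus c T A' Hs Hl Hd hA' LTA) as h.
  rewrite HA in h. replace (vdot (vopp A) A') with (- vdot A A') in h by (vunf; ring).
  split. { unfold ON; repeat split; auto. }
  symmetry. apply vsub_zero. apply vnorm0. unfold vnorm.
  replace (vdot (vsub A A') (vsub A A')) with (vdot A A - 2 * vdot A A' + vdot A' A') by (vunf; ring).
  pose proof (vdot_ge0 (vsub A A')).
  replace (vdot A A - 2 * vdot A A' + vdot A' A') with 0.
  apply sqrt_0.
  assert (vdot (vsub A A') (vsub A A') = vdot A A - 2 * vdot A A' + vdot A' A') by (vunf; ring).
  lra.
Qed.
Arguments dx : simpl never.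
Arguments normal : simpl never.
Arguments binormal : simpl never.
Arguments curv : simpl never.
Lemma vscale1 v : vscale 1 v = v.
Proof. veq. Qed.
Lemma vscale_inj c u v : c <> 0 -> vscale c u = vscale c v -> u = v.
Proof. intros hc H. assert (vscale (/c) (vscale c u) = vscale (/c) (vscale c v)) by (rewrite H; auto).
  replace (vscale (/c) (vscale c u)) with u in H0 by (apply V3_ext; vunf; field; auto).
  replace (vscale (/c) (vscale c v)) with v in H0 by (apply V3_ext; vunf; field; auto). auto. Qed.

Lemma rho_facts Ap Am : vdot Ap Ap = 1 -> vdot Am Am = 1 -> vcross Ap Am <> V0 ->
  rho Ap Am Ap = vopp Am /\ rho Ap Am Am = vopp Ap /\ rho Ap Am (vcross Ap Am) = vopp (vcross Ap Am) /\
  (forall u w, rho Ap Am (vadd u w) = vadd (rho Ap Am u) (rho Ap Am w)) /\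
  (forall c u, rho Ap Am (vscale c u) = vscale c (rho Ap Am u)).
Proof.
  intros h1 h2 hN. set (d := vsub Ap Am).
  assert (hdd : 0 < vdot d d).
  { pose proof (vdot_ge0 d). destruct (Req_dec (vdot d d) 0) as [h|h]; [|lra].
    exfalso. apply hN. assert (d = V0) by (apply vnorm0; unfold vnorm; rewrite h; apply sqrt_0).
    assert (Ap = Am) by (apply vsub_zero; auto). subst. unfold V0; veq. }
  assert (F : forall v, rho Ap Am v = vadd (vopp v) (vscale (2 * vdot d v / vdot d d) d)).
  { intros v. unfold rho. fold d. rewrite rot_PI. rewrite <- vnorm_sqr.
    pose proof (vnorm_ge0 d). assert (0 < vnorm d).
    { destruct (Req_dec (vnorm d) 0) as [h|h]; [|lra]. rewrite <- vnorm_sqr, h in hdd. lra. }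
    set (q := vnorm d) in *. apply V3_ext; vunf; field; lra. }
  assert (e1 : vdot d d = 2 - 2 * vdot Ap Am).
  { replace (vdot d d) with (vdot Ap Ap - 2 * vdot Ap Am + vdot Am Am) by (unfold d; vunf; ring). lra. }
  split; [|split; [|split; [|split]]].
  - rewrite F. replace (vdot d Ap) with (vdot Ap Ap - vdot Ap Am) by (unfold d; vunf; ring).
    rewrite e1, h1. replace (2 * (1 - vdot Ap Am) / (2 - 2 * vdot Ap Am)) with 1 by (field; lra).
    unfold d; veq.
  - rewrite F. replace (vdot d Am) with (vdot Ap Am - vdot Am Am) by (unfold d; vunf; ring).
    rewrite e1, h2. replace (2 * (vdot Ap Am - 1) / (2 - 2 * vdot Ap Am)) with (-1) by (field; lra).
    unfold d; veq.
  - rewrite F. replace (vdot d (vcross Ap Am)) with 0 by (unfold d; vunf; ring).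
    replace (2 * 0 / vdot d d) with 0 by (unfold Rdiv; ring). veq.
  - intros; unfold rho; apply rot_add.
  - intros; unfold rho; apply rot_scale.
Qed.

Theorem proposition2p2 :
  forall (Ap Am : V3) (a as_ : R) (chi chis : R -> R -> V3) (Bp Bm Bps Bms : CV3),
    vnorm Ap = 1 -> vnorm Am = 1 -> vcross Ap Am <> mkV 0 0 0 ->
    corner_param Ap Am a ->
    selfsimilar_solution Ap Am a chi ->
    is_Bplus chi a Bp -> is_Bminus chi a Bm ->
    corner_param (vopp Am) (vopp Ap) as_ ->
    selfsimilar_solution (vopp Am) (vopp Ap) as_ chis ->
    is_Bplus chis as_ Bps -> is_Bminus chis as_ Bms ->
    rho Ap Am Ap = vopp Am /\ rho Ap Am Am = vopp Ap /\
    Bps = capply (rho Ap Am) Bp /\ Bms = capply (rho Ap Am) Bm /\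
    (exists Rm : V3 -> V3, rotation_2theta Am Ap Am Bm Rm /\
        Rm (vopp Am) = vopp Am /\ Bps = capply Rm (cconj Bm)) /\
    (exists Rp : V3 -> V3, rotation_2theta Ap Ap Am Bp Rp /\
        Rp (vopp Ap) = vopp Ap /\ Bms = capply Rp (cconj Bp)).
Proof.
  intros Ap Am a as_ chi chis Bp Bm Bps Bms hAp hAm hN CPa SSa BPa BMa CPs SSs BPs BMs.
  fold V0 in hN.
  assert (ha : 0 < a) by apply CPa.
  assert (Eas : as_ = a).
  { destruct CPa as [_ e1]. destruct CPs as [hs e2].
    assert (angle (vopp Am) (vopp (vopp Ap)) = angle Ap (vopp Am)) as E
      by (unfold angle; f_equal; vunf; ring).
    rewrite E, e1 in e2. apply exp_inv in e2. pose proof PI_RGT_0.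
    assert (PI * ((a - as_) * (a + as_)) = 0) by nra.
    apply Rmult_integral in H0. destruct H0 as [h|h]; [lra|].
    apply Rmult_integral in h. destruct h; lra. }
  subst as_.
  assert (uAp : vdot Ap Ap = 1) by (rewrite (vnorm_sq _ _ hAp); ring).
  assert (uAm : vdot Am Am = 1) by (rewrite (vnorm_sq _ _ hAm); ring).
  destruct (unpack Ap Am a chi ha SSa) as [FS [GF [DC [SC [LC [P0 [M0 PH]]]]]]].
  destruct (unpack (vopp Am) (vopp Ap) a chis ha SSs) as [FSs [GFs [DCs [SCs [LCs [P0s [M0s PHs]]]]]]].
  destruct (rho_facts Ap Am uAp uAm hN) as [rA [rB [rN [radd rscal]]]].
  (* ---------- case A : chis = R chi ---------- *)
  set (E0 := frame_at chis 1 0). set (F0 := frame_at chi 1 0).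
  assert (FU : forall x, dx chis 1 x = Rmap E0 F0 (dx chi 1 x) /\
     normal chis 1 x = Rmap E0 F0 (normal chi 1 x) /\ binormal chis 1 x = Rmap E0 F0 (binormal chi 1 x)).
  { exact (frame_uniq (dx chis 1) (normal chis 1) (binormal chis 1) (dx chi 1) (normal chi 1) (binormal chi 1)
      a (fun y => y/2) 1 FSs FS (GFs 0) (GF 0)). }
  set (p := vsub (chis 1 0) (Rmap E0 F0 (chi 1 0))).
  assert (Cv : forall y, chis 1 y = vadd (Rmap E0 F0 (chi 1 y)) p).
  { assert (Z : forall y, vder (fun y => vsub (chis 1 y) (Rmap E0 F0 (chi 1 y))) y V0).
    { intros y. eapply vder_eq. apply vder_sub. apply DCs. apply vder_Rmap. apply DC.
      rewrite (proj1 (FU y)). unfold V0; veq. }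
    intros y. pose proof (vdzero_const _ Z y 0) as h. simpl in h. fold p in h. rewrite <- h. veq. }
  assert (Lx : forall x, chis 0 x = Rmap E0 F0 (chi 0 x)).
  { intros x. apply (lim0_transfer (fun t => chis t x) (fun t => chi t x) _ _ E0 F0 1 p (GFs 0) (GF 0)).
    - intros t ht. rewrite (SCs t x ht), Cv, (SC t x ht), Rmap_scale. veq.
    - apply LCs.
    - apply LC. }
  assert (RAp : Rmap E0 F0 Ap = vopp Am).
  { pose proof (Lx 1) as h. rewrite P0s, P0, Rmap_scale, !vscale1 in h by lra. auto. }
  assert (RAm : Rmap E0 F0 Am = vopp Ap).
  { pose proof (Lx (-1)) as h. rewrite M0s, M0, Rmap_scale in h by lra.
    symmetry; apply (vscale_inj (-1)); auto. lra. }
  assert (RR : forall v, rho Ap Am v = Rmap E0 F0 v).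
  { apply lin_eq with Ap Am; auto.
    - intros; apply Rmap_add.
    - intros; apply Rmap_scale.
    - rewrite RAp; auto.
    - rewrite RAm; auto.
    - rewrite rN. pose proof (Rmap_cross E0 F0 1 Ap Am (GFs 0) (GF 0)) as h.
      rewrite vscale1, RAp, RAm in h. rewrite <- h. veq. }
  assert (MF : forall x, modframe chis a 1 x = capply (Rmap E0 F0) (modframe chi a 1 x)).
  { intros x. unfold modframe; cbv zeta. rewrite PHs, PH. destruct (FU x) as [_ [hn hb]].
    rewrite hn, hb. unfold capply; simpl. f_equal.
    - rewrite Rmap_sub, !Rmap_scale; reflexivity.
    - rewrite Rmap_add, !Rmap_scale; reflexivity. }
  assert (EBps : Bps = capply (rho Ap Am) Bp).
  { destruct (BPs 1 Rlt_0_1) as [l1 l2]. destruct (BPa 1 Rlt_0_1) as [k1 k2].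
    apply vlim_pinf in l1, l2, k1, k2.
    assert (c1 : cre Bps = Rmap E0 F0 (cre Bp)).
    { apply (vlim_unique p_infty (fun x => cre (modframe chis a 1 x))); auto.
      eapply vlim_ext. 2: apply vlim_Rmap; exact k1. intros y; rewrite MF; reflexivity. }
    assert (c2 : cim Bps = Rmap E0 F0 (cim Bp)).
    { apply (vlim_unique p_infty (fun x => cim (modframe chis a 1 x))); auto.
      eapply vlim_ext. 2: apply vlim_Rmap; exact k2. intros y; rewrite MF; reflexivity. }
    destruct Bps; simpl in *. unfold capply. rewrite !RR. congruence. }
  assert (EBms : Bms = capply (rho Ap Am) Bm).
  { destruct (BMs 1 Rlt_0_1) as [l1 l2]. destruct (BMa 1 Rlt_0_1) as [k1 k2].
    apply vlim_minf in l1, l2, k1, k2.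
    assert (c1 : cre Bms = Rmap E0 F0 (cre Bm)).
    { apply (vlim_unique m_infty (fun x => cre (modframe chis a 1 x))); auto.
      eapply vlim_ext. 2: apply vlim_Rmap; exact k1. intros y; rewrite MF; reflexivity. }
    assert (c2 : cim Bms = Rmap E0 F0 (cim Bm)).
    { apply (vlim_unique m_infty (fun x => cim (modframe chis a 1 x))); auto.
      eapply vlim_ext. 2: apply vlim_Rmap; exact k2. intros y; rewrite MF; reflexivity. }
    destruct Bms; simpl in *. unfold capply. rewrite !RR. congruence. }
  (* ---------- case B : chis(x) = M chi(-x) ---------- *)
  set (T2 := fun y => vopp (dx chi 1 (-y))).
  set (n2 := fun y => normal chi 1 (-y)).
  set (b2 := fun y => binormal chi 1 (-y)).
  assert (FS2 : frenet_sys T2 n2 b2 a (fun y => y/2)).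
  { intros y. destruct (FS (-y)) as [f1 [f2 f3]]. split; [|split].
    - unfold T2, vopp. eapply vder_eq. apply vder_cscale. apply vder_comp_opp. exact f1.
      unfold n2; veq.
    - eapply vder_eq. apply vder_comp_opp. exact f2. unfold T2, b2.
      generalize (dx chi 1 (-y)) (normal chi 1 (-y)) (binormal chi 1 (-y)). intros. apply V3_ext; vunfg; field.
    - eapply vder_eq. apply vder_comp_opp. exact f3. unfold n2.
      generalize (dx chi 1 (-y)) (normal chi 1 (-y)) (binormal chi 1 (-y)). intros. apply V3_ext; vunfg; field. }
  assert (G2 : good (mkFr (T2 0) (n2 0) (b2 0)) (-1)).
  { destruct (GF (-0)) as [[g1 [g2 g3]] [g4 _]]. unfold frame_at in *; simpl in *.
    unfold T2, n2, b2; simpl. split; [split; [|split]|split]; cbn [fT fN fB].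
    - transitivity (vdot (dx chi 1 (-0)) (dx chi 1 (-0))); [|exact g1].
      generalize (dx chi 1 (-0)); intros; vunfg; ring.
    - exact g2.
    - replace (vdot (vopp (dx chi 1 (-0))) (normal chi 1 (-0))) with (- vdot (dx chi 1 (-0)) (normal chi 1 (-0)))
        by (generalize (dx chi 1 (-0)) (normal chi 1 (-0)); intros; vunfg; ring). rewrite g3; ring.
    - rewrite g4. veq.
    - ring. }
  set (F2 := mkFr (T2 0) (n2 0) (b2 0)).
  assert (FU2 : forall x, dx chis 1 x = Rmap E0 F2 (T2 x) /\
     normal chis 1 x = Rmap E0 F2 (n2 x) /\ binormal chis 1 x = Rmap E0 F2 (b2 x)).
  { exact (frame_uniq (dx chis 1) (normal chis 1) (binormal chis 1) T2 n2 b2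
      a (fun y => y/2) (-1) FSs FS2 (GFs 0) G2). }
  set (p2 := vsub (chis 1 0) (Rmap E0 F2 (chi 1 (-0)))).
  assert (Cv2 : forall y, chis 1 y = vadd (Rmap E0 F2 (chi 1 (-y))) p2).
  { assert (Z : forall y, vder (fun y => vsub (chis 1 y) (Rmap E0 F2 (chi 1 (-y)))) y V0).
    { intros y. eapply vder_eq. apply vder_sub. apply DCs. apply vder_Rmap.
      apply (vder_comp_opp (chi 1)). apply DC.
      rewrite (proj1 (FU2 y)). unfold T2, V0; veq. }
    intros y. pose proof (vdzero_const _ Z y 0) as h. simpl in h. fold p2 in h. rewrite <- h. veq. }
  assert (Lx2 : forall x, chis 0 x = Rmap E0 F2 (chi 0 (-x))).
  { intros x. apply (lim0_transfer (fun t => chis t x) (fun t => chi t (-x)) _ _ E0 F2 (-1) p2 (GFs 0) G2).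
    - intros t ht. rewrite (SCs t x ht), Cv2, (SC t (-x) ht), Rmap_scale.
      replace (- x / sqrt t) with (- (x / sqrt t)) by (unfold Rdiv; ring). veq.
    - apply LCs.
    - apply LC. }
  set (M := Rmap E0 F2).
  assert (MAm : M Am = Am).
  { pose proof (Lx2 1) as h. rewrite P0s, M0, Rmap_scale, vscale1 in h by lra. fold M in h.
    apply (vscale_inj (-(1))). lra. rewrite <- h. veq. }
  assert (MAp : M Ap = Ap).
  { pose proof (Lx2 (-1)) as h. replace (- -1) with 1 in h by ring.
    rewrite M0s, P0, Rmap_scale, vscale1 in h by lra. fold M in h.
    rewrite <- h. veq. }
  assert (Mform : forall v, M v = vsub v (vscale (2 * vdot v (vcross Ap Am) / vdot (vcross Ap Am) (vcross Ap Am)) (vcross Ap Am))).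
  { assert (hnn : vdot (vcross Ap Am) (vcross Ap Am) <> 0).
    { intros h. apply hN. apply vnorm0. unfold vnorm. rewrite h. apply sqrt_0. }
    apply lin_eq with Ap Am; auto.
    - intros; apply Rmap_add.
    - intros; apply Rmap_scale.
    - intros; veq.
    - intros; veq.
    - rewrite MAp. replace (vdot Ap (vcross Ap Am)) with 0 by (vunf; ring). veq.
    - rewrite MAm. replace (vdot Am (vcross Ap Am)) with 0 by (vunf; ring). veq.
    - pose proof (Rmap_cross E0 F2 (-1) Ap Am (GFs 0) G2) as h. fold M in h.
      rewrite MAp, MAm in h.
      assert (M (vcross Ap Am) = vopp (vcross Ap Am)).
      { apply (vscale_inj (-1)). lra. rewrite <- h. veq. }
      rewrite H. apply V3_ext; vunf; field; vunf; auto. }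
  assert (MF2 : forall x, modframe chis a 1 x = capply M (modframe chi a 1 (-x))).
  { intros x. unfold M. unfold modframe; cbv zeta. rewrite PHs, PH. rewrite Rabs_Ropp.
    replace (- x * - x) with (x * x) by ring.
    destruct (FU2 x) as [_ [hn hb]]. rewrite hn, hb. unfold capply; simpl. f_equal.
    - rewrite Rmap_sub, !Rmap_scale; reflexivity.
    - rewrite Rmap_add, !Rmap_scale; reflexivity. }
  assert (EBps2 : Bps = mkCV (M (cre Bm)) (M (cim Bm))).
  { destruct (BPs 1 Rlt_0_1) as [l1 l2]. destruct (BMa 1 Rlt_0_1) as [k1 k2].
    apply minf_to_pinf in k1, k2. apply vlim_pinf in l1, l2, k1, k2.
    assert (c1 : cre Bps = M (cre Bm)).
    { apply (vlim_unique p_infty (fun x => cre (modframe chis a 1 x))); auto.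
      eapply vlim_ext. 2: apply vlim_Rmap; exact k1. intros y; rewrite MF2; reflexivity. }
    assert (c2 : cim Bps = M (cim Bm)).
    { apply (vlim_unique p_infty (fun x => cim (modframe chis a 1 x))); auto.
      eapply vlim_ext. 2: apply vlim_Rmap; exact k2. intros y; rewrite MF2; reflexivity. }
    destruct Bps; simpl in *. congruence. }
  assert (EBms2 : Bms = mkCV (M (cre Bp)) (M (cim Bp))).
  { destruct (BMs 1 Rlt_0_1) as [l1 l2]. destruct (BPa 1 Rlt_0_1) as [k1 k2].
    apply pinf_to_minf in k1, k2. apply vlim_minf in l1, l2, k1, k2.
    assert (c1 : cre Bms = M (cre Bp)).
    { apply (vlim_unique m_infty (fun x => cre (modframe chis a 1 x))); auto.
      eapply vlim_ext. 2: apply vlim_Rmap; exact k1. intros y; rewrite MF2; reflexivity. }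
    assert (c2 : cim Bms = M (cim Bp)).
    { apply (vlim_unique m_infty (fun x => cim (modframe chis a 1 x))); auto.
      eapply vlim_ext. 2: apply vlim_Rmap; exact k2. intros y; rewrite MF2; reflexivity. }
    destruct Bms; simpl in *. congruence. }
  assert (SBm : ON (cre Bm) (cim Bm) /\ vcross (cre Bm) (cim Bm) = Am).
  { destruct (BMa 1 Rlt_0_1) as [k1 k2]. apply vlim_minf in k1, k2.
    apply (Bstruct chi (dx chi 1) (fun y => cre (modframe chi a 1 y)) (fun y => cim (modframe chi a 1 y)));
      [ | apply LC | apply DC | | exact k1 | exact k2 | | exact uAm ].
    - intros t ht. rewrite (SC t (-1) ht). reflexivity.
    - intros y. apply modframe_props. apply GF.
    - rewrite M0 by lra. reflexivity. }
  assert (SBp : ON (cre Bp) (cim Bp) /\ vcross (cre Bp) (cim Bp) = Ap).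
  { destruct (BPa 1 Rlt_0_1) as [k1 k2]. apply pinf_to_minf in k1, k2. apply vlim_minf in k1, k2.
    apply (Bstruct (fun t x => vopp (chi t (-x))) (fun y => dx chi 1 (-y))
       (fun y => cre (modframe chi a 1 (-y))) (fun y => cim (modframe chi a 1 (-y))));
      [ | | | | exact k1 | exact k2 | | exact uAp ].
    - intros t ht. simpl. replace (- -1) with 1 by ring. rewrite (SC t 1 ht).
      replace (- (-1 / sqrt t)) with (1 / sqrt t) by (unfold Rdiv; ring). veq.
    - intros eps he. destruct (LC 1 eps he) as [d [hd Hd]]. exists d. split; auto.
      intros t ht. replace (- -1) with 1 by ring.
      replace (vsub (vopp (chi t 1)) (vopp (chi 0 1))) with (vopp (vsub (chi t 1) (chi 0 1))) by veq.
      rewrite vnorm_opp. auto.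
    - intros y. eapply vder_eq. apply (vder_cscale (-1)). apply (vder_comp_opp (chi 1)). apply DC. veq.
    - intros y. apply modframe_props. apply GF.
    - replace (- -1) with 1 by ring. rewrite P0 by lra. veq. }
  split; [exact rA|split; [exact rB|split; [exact EBps|split; [exact EBms|split]]]].
  - destruct SBm as [ONm Cm].
    destruct (final_rot Am Ap Am (cre Bm) (cim Bm) M uAm ONm Cm hN) as [Rf [h1 [h2 h3]]].
    + vunf; ring.
    + exact Mform.
    + exists Rf. destruct Bm as [w im]. simpl in *. split; auto. split; auto.
      rewrite EBps2. exact h3.
  - destruct SBp as [ONp Cp].
    destruct (final_rot Ap Ap Am (cre Bp) (cim Bp) M uAp ONp Cp hN) as [Rf [h1 [h2 h3]]].
    + vunf; ring.
    + exact Mform.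
    + exists Rf. destruct Bp as [w im]. simpl in *. split; auto. split; auto.
      rewrite EBms2. exact h3.
Qed.
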